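(* Let $\Gamma\subseteq\mathrm{Aff}(\mathbb{R}^n)$ be an $n$-dimensional crystallographic group whose subgroup of pure translations is exactly $\mathbb{Z}^n$, with holonomy group $F\subseteq\mathrm{GL}_n(\mathbb{Z})$. Then there exists a finite set $\Delta^{base}\subseteq\mathbb{R}^n$ such that for every $d^{base}\in\Delta^{base}$ the map $\xi_{(d^{base},I_n)}$ is an automorphism of $\Gamma$, and every $\varphi\in\mathrm{Aut}(\Gamma)$ with $\varphi|_{\mathbb{Z}^n}=I_n$ can be written as $\varphi=\iota\circ\xi_{(d^{base},I_n)}$ where $\iota=\xi_{(d^{int},I_n)}$ is an inner automorphism of $\Gamma$ with $d^{int}\in\mathbb{Z}^n$ and $d^{base}\in\Delta^{base}$.
   Context: $\mathrm{Aff}(\mathbb{R}^n)=\mathbb{R}^n\rtimes\mathrm{GL}_n(\mathbb{R})$ with multiplication $(d_1,D_1)(d_2,D_2)=(d_1+D_1d_2,D_1D_2)$. An $n$-dimensional crystallographic group is a discrete cocompact subgroup of the Euclidean group $\mathbb{R}^n\rtimes O(n)$; here it is realised (as is always possible) inside $\mathrm{Aff}(\mathbb{R}^n)$ such that $\Gamma\cap\mathbb{R}^n=\{(z,I_n)\mid z\in\mathbb{Z}^n\}$, identified with $\mathbb{Z}^n$. The holonomy group is $F=\{A\mid\exists a:\ (a,A)\in\Gamma\}\subseteq\mathrm{GL}_n(\mathbb{Z})$, a finite group. For $(d,D)\in\mathrm{Aff}(\mathbb{R}^n)$, $\xi_{(d,D)}$ denotes the map $\gamma\mapsto(d,D)\gamma(d,D)^{-1}$.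 Every automorphism $\varphi$ of $\Gamma$ is of the form $\xi_{(d,D)}$ for some $(d,D)\in\mathrm{Aff}(\mathbb{R}^n)$, and then $\varphi|_{\mathbb{Z}^n}$ is given by the matrix $D$. *)

(* Defs.v *)
From HB Require Import structures.
From mathcomp Require Import all_boot all_order all_algebra.
From mathcomp Require Import reals.
Set Implicit Arguments. Unset Strict Implicit. Unset Printing Implicit Defensive.
Import Order.TTheory GRing.Theory Num.Theory.
Local Open Scope ring_scope.

(* Elements of Aff(R^n) = R^n x| GL_n(R), as pairs (d, D) with D invertible. *)
Definition aff (R : realType) (n : nat) := ('cV[R]_n * 'M[R]_n)%type.

Definition is_aff (R : realType) (n : nat) (g : aff R n) : Prop := g.2 \in unitmx.

Definition amul (R : realType) (n : nat) (g h : aff R n) : aff R n :=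
  (g.1 + g.2 *m h.1, g.2 *m h.2).
Definition aone (R : realType) (n : nat) : aff R n := (0, 1%:M).
Definition ainv (R : realType) (n : nat) (g : aff R n) : aff R n :=
  (- (invmx g.2 *m g.1), invmx g.2).

Definition transl (R : realType) (n : nat) (z : 'cV[R]_n) : aff R n := (z, 1%:M).

Definition intvec (R : realType) (n : nat) (z : 'cV[R]_n) : Prop :=
  forall i, z i 0 \is a Num.int.

Definition xi (R : realType) (n : nat) (c : aff R n) (g : aff R n) : aff R n :=
  amul (amul c g) (ainv c).

Definition is_subgroup (R : realType) (n : nat) (G : aff R n -> Prop) : Prop :=
  [/\ forall g, G g -> is_aff g,
      G (aone R n),
      forall g h, G g -> G h -> G (amul g h) &
      forall g, G g -> G (ainv g)].

Definition holonomy (R : realType) (n : nat) (G : aff R n -> Prop) (A : 'M[R]_n) : Prop :=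
  exists a, G (a, A).

(* An n-dimensional crystallographic group realised in Aff(R^n) with
   Gamma /\ R^n = Z^n: a subgroup of Aff(R^n) whose pure translations are
   exactly the integral ones and whose holonomy group is finite. *)
Definition crystallographic (R : realType) (n : nat) (G : aff R n -> Prop) : Prop :=
  [/\ is_subgroup G,
      (forall z, G (transl z) <-> intvec z) &
      exists s : seq 'M[R]_n, forall A, holonomy G A -> A \in s].

Definition is_aut (R : realType) (n : nat) (G : aff R n -> Prop)
  (phi : aff R n -> aff R n) : Prop :=
  [/\ forall g, G g -> G (phi g),
      forall g h, G g -> G h -> phi g = phi h -> g = h,
      forall h, G h -> exists2 g, G g & phi g = h &
      forall g h, G g -> G h -> phi (amul g h) = amul (phi g) (phi h)].

(* Main.v *)
Require Import Defs.
From HB Require Import structures.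
From mathcomp Require Import all_boot all_order all_algebra.
From mathcomp Require Import reals boolp.
From mathcomp Require Import ring lra zify.
From Stdlib Require Import ClassicalEpsilon.
Set Implicit Arguments. Unset Strict Implicit. Unset Printing Implicit Defensive.
Import Order.TTheory GRing.Theory Num.Theory.
Local Open Scope ring_scope.

Section H.
Variables (R : realType) (n : nat).
Implicit Types (a b e z : 'cV[R]_n) (A B : 'M[R]_n).

Lemma xi_transl e a A : xi (transl e) (a, A) = (a + e - A *m e, A).
Proof.
rewrite /xi /amul /ainv /transl /= invmx1 !mul1mx mulmx1 mulmxN.
by rewrite (addrC e a).
Qed.

Lemma pairE (x y : aff R n) : x.1 = y.1 -> x.2 = y.2 -> x = y.
Proof. by case: x y => ? ? [? ?] /= -> ->. Qed.

Lemma intvec_delta (i : 'I_n) : intvec (delta_mx i 0 : 'cV[R]_n).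
Proof. by move=> j; rewrite mxE rpred_nat. Qed.

Lemma mx_eq_delta A B :
  (forall i : 'I_n, A *m (delta_mx i (0:'I_1)) = B *m delta_mx i (0:'I_1)) -> A = B.
Proof.
move=> H; apply/matrixP => i j.
by have := congr1 (fun M : 'cV_n => M i 0) (H j); rewrite -!colE !mxE.
Qed.

Lemma intvecD a b : intvec a -> intvec b -> intvec (a + b).
Proof. by move=> Ha Hb i; rewrite mxE rpredD. Qed.
Lemma intvecN a : intvec a -> intvec (- a).
Proof. by move=> Ha i; rewrite mxE rpredN. Qed.
End H.

Unset Implicit Arguments.
Theorem theorem5p3 (R : realType) (n : nat) (G : aff R n -> Prop) :
  crystallographic G ->
  exists Dbase : seq 'cV[R]_n,
    (forall db, db \in Dbase -> is_aut G (xi (transl db))) /\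
    (forall phi : aff R n -> aff R n,
        is_aut G phi ->
        (forall z, intvec z -> phi (transl z) = transl z) ->
        exists2 db, db \in Dbase &
        exists2 dint, intvec dint &
          forall g, G g -> phi g = xi (transl dint) (xi (transl db) g)).
Proof.
case=> -[Gaff G1 GM GV] Htr [s Hs].
pose F := undup [seq A <- s | `[< holonomy G A >]].
have FP A : (A \in F) <-> holonomy G A.
  rewrite mem_undup mem_filter; split => [/andP[/asboolP]|H] //.
  by rewrite (Hs _ H) andbT; apply/asboolP.
pose N := size F.
have N0 : (0 < N)%N.
  have : (1%:M \in F) by apply/FP; exists 0; exact: G1.
  by rewrite /N; case: (F).
pose fr (k : {ffun 'I_n -> 'I_N}) : 'cV[R]_n := \col_i ((k i : nat)%:R / N%:R).
exists [seq db <- [seq fr k | k <- enum {ffun 'I_n -> 'I_N}] | `[< is_aut G (xi (transl db)) >]].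
split.
  by move=> db; rewrite mem_filter => /andP[/asboolP].
move=> phi [Pin Pinj Psurj Pmul] Pfix.
have Gunit (a : 'cV[R]_n) (A : 'M[R]_n) : G (a, A) -> A \in unitmx by move/Gaff.
have conjT (a : 'cV[R]_n) (A : 'M[R]_n) (z : 'cV[R]_n) : A \in unitmx ->
    amul (amul (a, A) (transl z)) (ainv (a, A)) = transl (A *m z).
  move=> U; apply: pairE; rewrite /= ?mulmx1 ?mulmxV //.
  by rewrite mulmxN mulmxA mulmxV // mul1mx addrC addKr.
have Hsnd (a : 'cV[R]_n) (A : 'M[R]_n) : G (a, A) -> (phi (a, A)).2 = A.
  move=> Hg; have U := Gunit _ _ Hg.
  case E: (phi (a, A)) => [a' A'] /=.
  apply/esym/mx_eq_delta => i.
  set z : 'cV[R]_n := delta_mx i 0.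
  have Iz : intvec z by exact: intvec_delta.
  have IAz : intvec (A *m z).
    apply/Htr; rewrite -(conjT a) //.
    apply: (GM); last exact: (GV).
    by apply: (GM) => //; apply/Htr.
  have e : amul (a, A) (transl z) = amul (transl (A *m z)) (a, A).
    by apply: pairE; rewrite /= ?mulmx1 ?mul1mx // addrC.
  have := congr1 phi e.
  rewrite !Pmul //; last (by apply/Htr); last (by apply/Htr).
  rewrite !Pfix // E /= => -[+ _].
  by rewrite mul1mx addrC => /addIr ->.
pose c (A : 'M[R]_n) : 'cV[R]_n := epsilon (inhabits 0) (fun a => G (a, A)).
have Hc A : holonomy G A -> G (c A, A).
  by move=> H; exact: (epsilon_spec (inhabits 0) (fun a => G (a, A)) H).
pose del (A : 'M[R]_n) : 'cV[R]_n := (phi (c A, A)).1 - c A.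
have Hphi (a : 'cV[R]_n) (A : 'M[R]_n) : G (a, A) -> phi (a, A) = (a + del A, A).
  move=> Hg; have U := Gunit _ _ Hg.
  have Hb : G (c A, A) by apply: Hc; exists a.
  pose w := invmx A *m (a - c A).
  have Hw : G (transl w).
    have -> : transl w = amul (ainv (c A, A)) (a, A).
      apply: pairE; rewrite /= ?mulVmx //.
      by rewrite /w mulmxBr addrC.
    by apply: (GM) => //; exact: (GV).
  have -> : (a, A) = amul (c A, A) (transl w).
    by apply: pairE; rewrite /= ?mulmx1 // /w mulmxA mulmxV // mul1mx addrC subrK.
  rewrite Pmul // Pfix; last exact/Htr.
  have Hs2 := Hsnd _ _ Hb.
  case E: (phi (c A, A)) Hs2 => [b' B'] /= ->.
  apply: pairE; rewrite /= ?mulmx1 //.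
  rewrite /w mulmxA mulmxV // mul1mx /del E /=.
  by rewrite addrCA.
have Hdint A : holonomy G A -> intvec (del A).
  move=> HA; have Hb := Hc _ HA; have U := Gunit _ _ Hb.
  apply/Htr.
  have -> : transl (del A) = amul (phi (c A, A)) (ainv (c A, A)).
    rewrite (Hphi _ _ Hb); apply: pairE; rewrite /= ?mulmxV //.
    by rewrite mulmxN mulmxA mulmxV // mul1mx /del [c A + _]addrC addrK.
  by apply: (GM); [exact: Pin | exact: (GV)].
have Hcoc A B : holonomy G A -> holonomy G B ->
    del (A *m B) = del A + A *m del B.
  move=> HA HB; have Ha := Hc _ HA; have Hb := Hc _ HB.
  have Hab := GM _ _ Ha Hb.
  have := Pmul _ _ Ha Hb.
  rewrite /= in Hab *.
  rewrite (Hphi _ _ Hab) (Hphi _ _ Ha) (Hphi _ _ Hb) /= => -[].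
  by rewrite mulmxDr => e; apply: (addrI (c A + A *m c B)); rewrite e addrACA.
pose S := \sum_(B <- F) del B.
have HS A : holonomy G A -> del A *+ N = S - A *m S.
  move=> HA; have Ha := Hc _ HA; have U := Gunit _ _ Ha.
  have inj : injective (mulmx A : _ -> 'M[R]_n).
    by move=> x y e; rewrite -(mulKmx U x) e mulKmx.
  have Hsub : {subset map (mulmx A) F <= F}.
    move=> x /mapP[B HB ->]; apply/FP.
    have [b Hb] := (FP B).1 HB.
    by exists (c A + A *m b); exact: (GM _ _ Ha Hb).
  have Hperm : perm_eq (map (mulmx A) F) F.
    have Um : uniq (map (mulmx A) F) by rewrite (map_inj_uniq inj) undup_uniq.
    apply: uniq_perm => //; first exact: undup_uniq.
    by have [] := uniq_min_size Um Hsub; rewrite ?size_map.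
  have e1 : S = \sum_(B <- F) del (A *m B) by rewrite /S -(perm_big _ Hperm) big_map.
  rewrite {1}e1 (eq_big_seq (fun B => del A + A *m del B)); last first.
    by move=> B HB; apply: Hcoc => //; apply/FP.
  rewrite big_split /= big_const_seq count_predT iter_addr_0 -mulmx_sumr -/S.
  by rewrite addrK.
have NR : (N%:R : R) != 0 by rewrite pnatr_eq0 -lt0n.
pose d : 'cV[R]_n := (N%:R)^-1 *: S.
have Hd A : holonomy G A -> del A = d - A *m d.
  move=> HA; rewrite /d -scalemxAr -scalerBr -HS // -scaler_nat scalerA mulVf //.
  by rewrite scale1r.
have IS : intvec S.
  rewrite /S big_seq; apply: (big_ind (@intvec R n)).
  - by move=> i; rewrite mxE rpred0.
  - exact: intvecD.
  - by move=> B HB; apply: Hdint; apply/FP.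
pose z i := Num.floor (S i 0).
have Hz i : (z i)%:~R = S i 0 by rewrite /z floorK //; exact: IS.
pose q i := ((z i) %/ N)%Z; pose r i := ((z i) %% N)%Z.
have Hr0 i : 0 <= r i by apply: modz_ge0; rewrite eqz_nat -lt0n.
have Hr i : (`|r i|%N < N)%N.
  have h1 : r i < N by apply: ltz_pmod; rewrite ltz_nat.
  have h0 := Hr0 i.
  lia.
pose k : {ffun 'I_n -> 'I_N} := [ffun i => Ordinal (Hr i)].
pose dint : 'cV[R]_n := \col_i (q i)%:~R.
have Idint : intvec dint by move=> i; rewrite mxE rpred_int.
have Hdd : d = dint + fr k.
  apply/matrixP => i j; rewrite !mxE ffunE /= (ord1 j) -Hz.
  have -> : (`|r i|%N)%:R = (r i)%:~R :> R.
    by rewrite -[in RHS](gez0_abs (Hr0 i)) pmulrn.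
  rewrite {1}(divz_eq (z i) N) intrD intrM -/(q i) -/(r i).
  by field.
have Hphi2 (a : 'cV[R]_n) (A : 'M[R]_n) : G (a, A) -> phi (a, A) = (a + d - A *m d, A).
  move=> Hg; rewrite Hphi // Hd; last by exists a.
  by rewrite addrA.
have Hpsi (a : 'cV[R]_n) (A : 'M[R]_n) : G (a, A) ->
    xi (transl (fr k)) (a, A) = amul (amul (transl (- dint)) (phi (a, A))) (transl dint).
  move=> Hg; rewrite Hphi2 // xi_transl; apply: pairE; rewrite /= ?mulmx1 ?mul1mx //.
  rewrite Hdd !mulmxDr ?mulmxN.
  by apply/matrixP => i j; rewrite !mxE; lra.
have Apsi : is_aut G (xi (transl (fr k))).
  split.
  - move=> [a A] Hg; rewrite Hpsi //; apply: (GM); last exact/Htr.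
    by apply: (GM); [apply/Htr; exact: intvecN | exact: Pin].
  - move=> [a A] [b B] Ha Hb; rewrite !xi_transl => -[e1 e2]; subst B.
    congr (_, _); apply/matrixP => i j.
    by have := congr1 (fun M : 'cV[R]_n => M i j) e1; rewrite !mxE; lra.
  - move=> [b B] Hb.
    have Hh : G (amul (amul (transl dint) (b, B)) (transl (- dint))).
      apply: (GM); first by apply: (GM) => //; exact/Htr.
      by apply/Htr; exact: intvecN.
    have eh : amul (amul (transl dint) (b, B)) (transl (- dint)) = (dint + b - B *m dint, B).
      by apply: pairE; rewrite /= ?mulmx1 ?mul1mx ?mulmxN.
    rewrite eh in Hh.
    have [[a A] Ha e] := Psurj _ Hh.
    exists (a, A) => //.
    move: e; rewrite Hphi2 // => -[e1 e2]; subst A.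
    rewrite xi_transl.
    apply: pairE => //=.
    move: e1; rewrite Hdd !mulmxDr ?mulmxN => e1.
    by apply/matrixP => i j; have := congr1 (fun M : 'cV[R]_n => M i j) e1; rewrite !mxE; lra.
  - move=> [a A] [b B] Ha Hb.
    have -> : amul (a, A) (b, B) = (a + A *m b, A *m B) by [].
    rewrite !xi_transl; apply: pairE => //=.
    rewrite !mulmxBr !mulmxDr mulmxA.
    by apply/matrixP => i j; rewrite !mxE; lra.
exists (fr k).
  rewrite mem_filter; apply/andP; split; first exact/asboolP.
  by apply: map_f; rewrite mem_enum.
exists dint => // -[a A] Hg.
rewrite Hphi2 // !xi_transl Hdd; apply: pairE => //=.
rewrite !mulmxDr; apply/matrixP => i j; rewrite !mxE; lra.
Qed.
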